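(* Let $2\le r<n$ be integers, let $p\in(0,1)$, and let real numbers $x_i\ge 0$ for $i=r+1,\dots,n$ and $y_i\ge u\ge 0$ for $i=1,\dots,r-1$ satisfy \[ \sum_{i=r+1}^n x_i + nu=\sum_{i=1}^{r-1}y_i. \] Then \[ \sum_{i=r+1}^n x_i^p+(r-1)u^p\le \Bigl(1-\frac1n\Bigr)^p\Bigl(\sum_{i=r+1}^n x_i^p+\sum_{i=1}^{r-1}y_i^p\Bigr). \] *)

(* Defs.v *)
(* real powers via powR (a `^ p), with 0 `^ p = 0 for p <> 0. *)
From mathcomp Require Import all_boot all_order all_algebra.
From mathcomp Require Import all_classical all_reals all_analysis.

(* Main.v *)
From mathcomp Require Import all_boot all_order all_algebra.
From mathcomp Require Import all_classical all_reals all_analysis.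
From mathcomp Require Import ring lra zify.
Require Import Defs.
Import Order.TTheory GRing.Theory Num.Theory.
Local Open Scope ring_scope.

Lemma amgm (R : realType) (p a b : R) : 0 < p -> p < 1 -> 0 <= a -> 0 <= b ->
  a `^ p * b `^ (1 - p) <= p * a + (1 - p) * b.
Proof.
move=> p0 p1 a0 b0.
have q0 : 0 < 1 - p by rewrite subr_gt0.
have := @conjugate_powR R (a `^ p) (b `^ (1 - p)) p^-1 (1-p)^-1 (powR_ge0 _ _)
  (powR_ge0 _ _) (eqbRL (invr_gt0 _) p0) (eqbRL (invr_gt0 _) q0).
rewrite !invrK -!powRrM !mulfV ?gt_eqF // !powRr1 // => /(_ (subrKC _ _)).
move=> H; apply: le_trans H _; rewrite mulrC [(1 - p) * _]mulrC; exact: le_refl.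
Qed.
Arguments amgm {R p a b}.

Lemma tangent (R : realType) (p y z : R) : 0 < p -> p < 1 -> 0 < y -> 0 <= z ->
  z `^ p <= p * y `^ (p - 1) * z + (1 - p) * y `^ p.
Proof.
move=> p0 p1 y0 z0.
have h := amgm p0 p1 z0 (ltW y0).
have e : y `^ (1 - p) * y `^ (p - 1) = 1.
  rewrite -powRD; last by apply/implyP => _; rewrite gt_eqF.
  by rewrite [X in _ `^ X](_ : _ = 0) ?powRr0 //; ring.
have e2 : y * y `^ (p - 1) = y `^ p by rewrite mulr_powRB1 // ltW.
have -> : z `^ p = z `^ p * y `^ (1-p) * y `^ (p-1) by rewrite -mulrA e mulr1.
apply: le_trans (ler_wpM2r (powR_ge0 _ _) h) _.
rewrite -e2 le_eqVlt; apply/orP; left; apply/eqP; ring.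
Qed.
Arguments tangent {R p y z}.

Lemma chord (R : realType) (p u y B : R) : 0 < p -> p < 1 -> 0 <= u -> u <= y ->
  y <= B -> (B - y) * u `^ p + (y - u) * B `^ p <= (B - u) * y `^ p.
Proof.
move=> p0 p1 u0 uy yB.
have [y0|ypos] := eqVneq y 0.
  have u0' : u = 0 by apply/eqP; rewrite eq_le u0 -y0 uy.
  by rewrite y0 u0' powR0 ?gt_eqF // !subrr !mulr0 mul0r addr0.
have y0 : 0 < y by rewrite lt_def ypos (le_trans u0 uy).
have h1 := tangent p0 p1 y0 u0.
have h2 := tangent p0 p1 y0 (le_trans u0 (le_trans uy yB)).
have e2 : y * y `^ (p - 1) = y `^ p by rewrite mulr_powRB1 // ltW.
apply: le_trans (lerD (ler_wpM2l _ h1) (ler_wpM2l _ h2)) _.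
- by rewrite subr_ge0.
- by rewrite subr_ge0.
by rewrite -e2 le_eqVlt; apply/orP; left; apply/eqP; ring.
Qed.
Arguments chord {R p u y B}.

Lemma sum_minus_one (R : realType) (a b j : nat) (F : nat -> R) (c : R) :
  (a <= j < b)%N -> (forall i, (a <= i < b)%N -> c <= F i) ->
  c *+ (b - a) - c <= \sum_(a <= i < b) F i - F j.
Proof.
move=> hj hF.
have jin : j \in index_iota a b by rewrite mem_index_iota.
have u : uniq (index_iota a b) by exact: iota_uniq.
have e1 := @bigD1_seq R +%R 0 nat (index_iota a b) j (fun=> c) jin u.
have e2 := @bigD1_seq R +%R 0 nat (index_iota a b) j F jin u.
have H : \sum_(i <- index_iota a b | i != j) c <= \sum_(i <- index_iota a b | i != j) F i.
  rewrite big_seq_cond [X in _ <= X]big_seq_cond.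
  apply: ler_sum => i /andP[ii _]; apply: hF.
  by rewrite -mem_index_iota.
rewrite -sumr_const_nat e1 e2.
rewrite addrC addKr addrC addKr //.
Qed.
Arguments sum_minus_one {R a b j F c}.

Lemma sq_bound (R : realType) (a b : R) : 0 <= a -> a <= b -> a ^+ 2 <= b ^+ 2.
Proof. by move=> a0 ab; rewrite lerXn2r // nnegrE (le_trans a0 ab). Qed.
Arguments sq_bound {R a b}.

Lemma expR1_le3 (R : realType) : expR (1 : R) <= 3.
Proof.
have h : expR (- 8^-1) >= 1 - 8^-1 :> R by apply: expR_ge1Dx.
have h2 : expR (8^-1 : R) <= 8 / 7.
  rewrite -[8^-1 : R]opprK expRN.
  have -> : (8 / 7 : R) = (1 - 8^-1)^-1 by field.
  rewrite lef_pV2 ?posrE ?expR_gt0 //; lra.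
have e1 : expR (4^-1 : R) = expR (8^-1) ^+ 2.
  by rewrite -expRM_natl; congr expR; field.
have e2 : expR (2^-1 : R) = expR (4^-1) ^+ 2.
  by rewrite -expRM_natl; congr expR; field.
have e3 : expR (1 : R) = expR (2^-1) ^+ 2.
  by rewrite -expRM_natl; congr expR; field.
have h4 : expR (4^-1 : R) <= 131 / 100.
  rewrite e1; apply: le_trans (sq_bound (expR_ge0 _) h2) _; lra.
have h5 : expR (2^-1 : R) <= 172 / 100.
  rewrite e2; apply: le_trans (sq_bound (expR_ge0 _) h4) _; lra.
rewrite e3; apply: le_trans (sq_bound (expR_ge0 _) h5) _; lra.
Qed.

Lemma jens (R : realType) (p B ww a : R) : 0 < p -> p < 1 -> 0 < B -> 0 < ww ->
  0 <= a ->
  ww `^ (1 - p) * a `^ p <= p * B `^ (p - 1) * a + (1 - p) * ww * B `^ p.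
Proof.
move=> p0 p1 B0 w0 a0.
have h := tangent p0 p1 (mulr_gt0 w0 B0) a0.
have e1 : ww `^ (1 - p) * ww `^ (p - 1) = 1.
  rewrite -powRD; last by apply/implyP => _; rewrite gt_eqF.
  by rewrite [X in _ `^ X](_ : _ = 0) ?powRr0 //; ring.
have e2 : ww `^ (1 - p) * ww `^ p = ww.
  rewrite -powRD; last by apply/implyP => _; rewrite gt_eqF.
  by rewrite [X in _ `^ X](_ : _ = 1) ?powRr1 ?ltW //; ring.
apply: le_trans (ler_wpM2l (powR_ge0 _ _) h) _.
rewrite !powRM ?(ltW w0) ?(ltW B0) //.
rewrite mulrDr !mulrA.
have -> : ww `^ (1 - p) * p * ww `^ (p - 1) = p by rewrite mulrAC e1 mul1r.
have -> : ww `^ (1 - p) * (1 - p) * ww `^ p = (1 - p) * ww by rewrite mulrAC e2 mulrC.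
by [].
Qed.
Arguments jens {R p B ww a}.

Theorem proposition4 (R : realType) (r n : nat) (p u : R) (x y : nat -> R) :
  (2 <= r)%N -> (r < n)%N -> 0 < p -> p < 1 ->
  (forall i, (r.+1 <= i <= n)%N -> 0 <= x i) ->
  0 <= u ->
  (forall i, (1 <= i <= r.-1)%N -> u <= y i) ->
  \sum_(r.+1 <= i < n.+1) x i + n%:R * u = \sum_(1 <= i < r) y i ->
  \sum_(r.+1 <= i < n.+1) x i `^ p + (r.-1)%:R * u `^ p
    <= (1 - n%:R^-1) `^ p *
       (\sum_(r.+1 <= i < n.+1) x i `^ p + \sum_(1 <= i < r) y i `^ p).
Proof.
move=> r2 rn p0 p1 hx u0 hy hsum.
have hx' : forall i, (r.+1 <= i < n.+1)%N -> 0 <= x i.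
  by move=> i /andP[a b]; apply: hx; rewrite a -ltnS b.
have hy' : forall i, (1 <= i < r)%N -> u <= y i.
  by move=> i /andP[a b]; apply: hy; rewrite a /=; lia.
have en : n%:R = (n - r)%:R + (r.-1)%:R + 1 :> R.
  rewrite -natrD natr1; congr (_%:R); lia.
set X := \sum_(r.+1 <= i < n.+1) x i.
set Sx := \sum_(r.+1 <= i < n.+1) x i `^ p.
set Y := \sum_(1 <= i < r) y i.
set Sy := \sum_(1 <= i < r) y i `^ p.
set kR := ((n - r)%:R : R).
set mR := ((r.-1)%:R : R).
have hk1 : 1 <= kR by rewrite /kR ler1n; lia.
have hm1 : 1 <= mR by rewrite /mR ler1n; lia.
have hX0 : 0 <= X by rewrite /X big_nat_cond; apply: sumr_ge0 => i /andP[hi _]; exact: hx'.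
have hSx0 : 0 <= Sx by apply: sumr_ge0 => i _; exact: powR_ge0.
have hSy0 : 0 <= Sy by apply: sumr_ge0 => i _; exact: powR_ge0.
have hY : Y = X + n%:R * u by rewrite hsum.
set C := (1 - n%:R^-1) `^ p.
have hC0 : 0 <= C by exact: powR_ge0.
set B := X + (kR + 2) * u.
have hku : 0 <= kR * u by apply: mulr_ge0 => //; lra.
have : 0 <= B by rewrite /B; nra.
rewrite le_eqVlt => /orP[/eqP B0|Bpos].
  have X0 : X = 0 by rewrite /B in B0; nra.
  have U0 : u = 0 by rewrite /B in B0; nra.
  have Sx0 : Sx = 0.
    rewrite /Sx (eq_big_nat _ _ (F2 := fun=> 0)) ?big1_eq // => i hi.
    have := sum_minus_one hi hx'; rewrite -/X X0 mul0rn subr0 sub0r oppr_ge0 => xle.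
    have -> : x i = 0 by apply/eqP; rewrite eq_le xle hx'.
    by rewrite powR0 ?gt_eqF.
  rewrite Sx0 U0 powR0 ?gt_eqF // mulr0 addr0 add0r.
  exact: mulr_ge0.
have eB : B = X + kR * u + 2 * u by rewrite /B; ring.
have hBu : 0 < B - u by move: Bpos; rewrite eB; lra.
have hyB : forall j, (1 <= j < r)%N -> y j <= B.
  move=> j hj.
  have := sum_minus_one hj hy'; rewrite -/Y -mulr_natr subn1 -/mR => h.
  have : y j <= Y - (mR - 1) * u by lra.
  by rewrite hY en /B -/kR -/mR; lra.
have hSy : (mR - 1) * u `^ p + B `^ p <= Sy.
  have hs : \sum_(1 <= j < r) ((B - y j) * u `^ p + (y j - u) * B `^ p)
            <= \sum_(1 <= j < r) ((B - u) * y j `^ p).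
    apply: ler_sum_nat => j hj; apply: chord => //; [exact: hy' | exact: hyB].
  rewrite big_split /= -!mulr_suml -mulr_sumr !sumrB !sumr_const_nat -/Y -/Sy in hs.
  rewrite -(mulr_natr B) -(mulr_natr u) subn1 -/mR in hs.
  have eq1 : (B * mR - Y) * u `^ p + (Y - u * mR) * B `^ p
             = (B - u) * ((mR - 1) * u `^ p + B `^ p).
    by rewrite hY en /B -/kR -/mR; ring.
  rewrite eq1 in hs.
  by rewrite -(ler_pM2l hBu).
have hN : n%:R - 1 = kR + mR :> R by rewrite en; ring.
have hNpos : 0 < kR + mR by lra.
set w := p / (kR + mR).
have hw0 : 0 < w by rewrite /w divr_gt0.
have hw1 : w <= 1 by rewrite /w ler_pdivrMr // mul1r; lra.
set mu := 1 - kR * w.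
have hmu_e : mu = (kR + mR - kR * p) / (kR + mR) by rewrite /mu /w; field; lra.
have hkp : 0 < kR + mR - kR * p by nra.
have hmu : 0 < mu by rewrite hmu_e divr_gt0.
set g := B `^ (p - 1).
have hgB : B * g = B `^ p by rewrite /g mulr_powRB1 // ltW.
have hJx : w `^ (1 - p) * Sx <= p * g * X + (1 - p) * w * B `^ p * kR.
  have eS : \sum_(r.+1 <= i < n.+1) ((1 - p) * w * B `^ p) = (1 - p) * w * B `^ p * kR.
    by rewrite sumr_const_nat subSS mulr_natr.
  rewrite /Sx /X mulr_sumr mulr_sumr -eS -big_split /=.
  apply: ler_sum_nat => i hi; exact: jens p0 p1 Bpos hw0 (hx' i hi).
have hA0 : 0 <= (kR + 2) * u by apply: mulr_ge0 => //; lra.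
have hJA := jens p0 p1 Bpos hmu hA0.
have hJ : w `^ (1 - p) * Sx + mu `^ (1 - p) * ((kR + 2) * u) `^ p <= B `^ p.
  apply: le_trans (lerD hJx hJA) _.
  have -> : p * g * X + (1 - p) * w * B `^ p * kR +
    (p * B `^ (p - 1) * ((kR + 2) * u) + (1 - p) * mu * B `^ p)
    = p * (B * g) + (1 - p) * (kR * w + mu) * B `^ p by rewrite /B /g; ring.
  rewrite hgB /mu.
  by rewrite le_eqVlt; apply/orP; left; apply/eqP; ring.
have hn0 : 0 < n%:R :> R by rewrite en; lra.
set Q := ((kR + mR + 1) / (kR + mR)) `^ p.
have hQ : Q <= 1 + w.
  have hq0 : 0 <= (kR + mR + 1) / (kR + mR) by apply: divr_ge0; lra.
  have := amgm p0 p1 hq0 ler01.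
  rewrite powR1 mulr1 -/Q => h; apply: le_trans h _.
  rewrite /w le_eqVlt; apply/orP; left; apply/eqP; field; lra.
have hCQ : C * Q = 1.
  rewrite /C /Q -powRM; last 2 first.
  - rewrite subr_ge0 invf_le1 // en; lra.
  - by apply: ltW; apply: divr_gt0 => //; lra.
  have -> : (1 - n%:R^-1) * ((kR + mR + 1) / (kR + mR)) = 1.
    rewrite en; field; lra.
  by rewrite powR1.
have hW : w <= w `^ (1 - p) by apply: ger1_powR; [rewrite hw0 hw1 | lra].
have hl1 : 1 <= ln (kR + 2).
  rewrite -ler_expR lnK ?posrE; last by lra.
  apply: le_trans (expR1_le3 R) _; lra.
have hl2 : 1 - mu^-1 <= ln mu.
  have hmi : 0 < mu^-1 by rewrite invr_gt0.
  have := @le_ln1Dx R (mu^-1 - 1) ltac:(lra).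
  rewrite addrC subrK lnV ?posrE //; lra.
have hV : 1 + mR * w <= mu `^ (1 - p) * (kR + 2) `^ p.
  rewrite /powR gt_eqF // gt_eqF; last by lra.
  rewrite -expRD; apply: le_trans (expR_ge1Dx _) _; rewrite ler_expR.
  have h1 : (1 - p) * (1 - mu^-1) <= (1 - p) * ln mu by apply: ler_wpM2l; lra.
  have h2 : p <= p * ln (kR + 2) by rewrite -[X in X <= _]mulr1; apply: ler_wpM2l; lra.
  suff : mR * w <= (1 - p) * (1 - mu^-1) + p by lra.
  rewrite -subr_ge0.
  have -> : (1 - p) * (1 - mu^-1) + p - mR * w
    = kR * p * p * mR / ((kR + mR) * (kR + mR - kR * p)).
    rewrite hmu_e /w; field; lra.
  apply: divr_ge0; last by apply: mulr_ge0; lra.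
  by apply: mulr_ge0; [apply: mulr_ge0; [apply: mulr_ge0|]|]; lra.
have hSyfull : (mR - 1) * u `^ p + w `^ (1 - p) * Sx
               + mu `^ (1 - p) * (kR + 2) `^ p * u `^ p <= Sy.
  apply: le_trans hSy; rewrite -addrA lerD2l; apply: le_trans hJ.
  by rewrite powRM // ?mulrA //; lra.
set W := w `^ (1 - p).
set V := mu `^ (1 - p) * (kR + 2) `^ p.
have h1 : 1 <= C * (1 + W).
  apply: le_trans (_ : C * Q <= _); first by rewrite hCQ.
  apply: ler_wpM2l => //; rewrite /W; lra.
have h2 : mR <= C * (mR - 1 + V).
  apply: le_trans (_ : mR * (C * Q) <= _); first by rewrite hCQ mulr1.
  have : mR * Q <= mR - 1 + V.
    have : mR * Q <= mR * (1 + w) by apply: ler_wpM2l; lra.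
    rewrite /V; lra.
  move=> h; rewrite mulrCA; apply: ler_wpM2l => //.
have hfu : 0 <= u `^ p by exact: powR_ge0.
apply: le_trans (_ : C * (1 + W) * Sx + C * (mR - 1 + V) * u `^ p <= _).
  apply: lerD.
    by rewrite -[X in X <= _]mul1r; apply: ler_wpM2r.
  by apply: ler_wpM2r.
have -> : C * (1 + W) * Sx + C * (mR - 1 + V) * u `^ p
  = C * (Sx + ((mR - 1) * u `^ p + W * Sx + V * u `^ p)) by ring.
apply: ler_wpM2l => //; apply: lerD => //; exact: hSyfull.
Qed.
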